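(* Let $(\mathcal H,\mathcal A)$ and $(\mathcal H',\mathcal A')$ be hypergraph pairs (with vertices in a common vertex set) such that for any $\sigma\in\mathcal H$ and $\sigma'\in\mathcal H'$, either $\sigma\cap\sigma'=\emptyset$ or $\sigma\cap\sigma'\in\mathcal H\cap\mathcal H'$; and for any $\tau\in\mathcal A$ and $\tau'\in\mathcal A'$, either $\tau\cap\tau'=\emptyset$ or $\tau\cap\tau'\in\mathcal A\cap\mathcal A'$. Then there is a long exact sequence of relative embedded homology $$\cdots\to H_n(\mathcal H\cap\mathcal H',\mathcal A\cap\mathcal A')\to H_n(\mathcal H,\mathcal A)\oplus H_n(\mathcal H',\mathcal A')\to H_n(\mathcal H\cup\mathcal H',\mathcal A\cup\mathcal A')\to H_{n-1}(\mathcal H\cap\mathcal H',\mathcal A\cap\mathcal A')\to\cdots.$$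
   Context: A hypergraph is a finite set of nonempty finite subsets of a vertex set (hyperedges); an $n$-hyperedge has $n+1$ vertices. A hypergraph pair $(\mathcal H,\mathcal A)$ means $\mathcal A\subseteq\mathcal H$. Unions and intersections of hypergraphs are taken as sets of hyperedges. The associated simplicial complex is $\Delta\mathcal H=\{\sigma\ne\emptyset:\sigma\subseteq\tau\text{ for some }\tau\in\mathcal H\}$. Fix an abelian coefficient group $G$; chains are simplicial chains with coefficients in $G$ (all inside the chain complex of the full simplex on the vertex set), with boundary $\partial$; $G(\mathcal H)_n$ is the group of $G$-linear combinations of $n$-hyperedges of $\mathcal H$, and $\mathrm{Inf}_n(\mathcal H)=G(\mathcal H)_n\cap\partial_n^{-1}(G(\mathcal H)_{n-1})$. Relative embedded homology: $H_n(\mathcal H,\mathcal A)=H_n(\mathrm{Inf}_*(\mathcal H)/\mathrm{Inf}_*(\mathcal A))$. *)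

(* Defs.v *)
From HB Require Import structures.
From mathcomp Require Import all_boot all_order all_algebra.
Set Implicit Arguments. Unset Strict Implicit. Unset Printing Implicit Defensive.
Import Order.TTheory GRing.Theory.
Local Open Scope ring_scope.

(* Vertex set: a finite type V (totally ordered by enum_rank, used to orient
   simplices).  A simplex / hyperedge is a {set V}; an n-simplex has n+1
   vertices.  Chains of the full simplex on V with coefficients in the abelian
   group G are finitely supported functions {set V} -> G; a chain of degree n
   is one supported on sets of cardinality n+1. *)
Notation chain V G := {ffun {set V} -> G}.

Definition hypergraph (V : finType) (H : {set {set V}}) : Prop := set0 \notin H.

(* simplicial boundary of the full simplex on V:
   d [v_0 < ... < v_n] = \sum_i (-1)^i [v_0 .. ^v_i .. v_n], and d_0 = 0. *)
Definition bd (V : finType) (G : zmodType) (c : chain V G) : chain V G :=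
  [ffun t : {set V} =>
     if t == set0 then 0
     else \sum_(v in ~: t)
            (if odd #|[set u in t | enum_rank u < enum_rank v]%N|
             then - c (v |: t) else c (v |: t))].

(* c belongs to G(H)_n : a G-linear combination of n-hyperedges of H *)
Definition inG (V : finType) (G : zmodType) (H : {set {set V}}) (n : nat)
  (c : chain V G) : Prop :=
  forall s : {set V}, c s != 0 -> (s \in H) /\ #|s| = n.+1.

(* Inf_n(H) = G(H)_n \cap d_n^{-1}(G(H)_{n-1})   (G(H)_{-1} = 0 = C_{-1}) *)
Definition Inf (V : finType) (G : zmodType) (H : {set {set V}}) (n : nat)
  (c : chain V G) : Prop :=
  inG H n c /\ match n with 0 => True | n'.+1 => inG H n' (bd c) end.

(* relative n-cycles of Inf_*(H)/Inf_*(A), given by representatives *)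
Definition relZ (V : finType) (G : zmodType) (H A : {set {set V}}) (n : nat)
  (c : chain V G) : Prop :=
  Inf H n c /\ match n with 0 => True | n'.+1 => Inf A n' (bd c) end.

(* representatives of zero in H_n(H,A): c \in d(Inf_{n+1}(H)) + Inf_n(A) *)
Definition relB (V : finType) (G : zmodType) (H A : {set {set V}}) (n : nat)
  (c : chain V G) : Prop :=
  exists d a : chain V G, Inf H n.+1 d /\ Inf A n a /\ c = bd d + a.

(* Main.v *)
Require Import Defs.
From HB Require Import structures.
From mathcomp Require Import all_boot all_order all_algebra.
Set Implicit Arguments. Unset Strict Implicit. Unset Printing Implicit Defensive.
Import GRing.Theory.
Local Open Scope ring_scope.
Definition eps (V : finType) (t : {set V}) (v : V) :=
  odd #|[set u in t | (enum_rank u < enum_rank v)%N]|.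

Definition sgn (G : zmodType) (b : bool) (x : G) := if b then - x else x.

Lemma bdE (V : finType) (G : zmodType) (c : chain V G) t : t != set0 ->
  bd c t = \sum_(v in ~: t) sgn (eps t v) (c (v |: t)).
Proof. by move=> /negbTE nt; rewrite ffunE nt. Qed.

Lemma epsU (V : finType) (v w : V) (t : {set V}) : v \notin t ->
  eps (v |: t) w = eps t w (+) (enum_rank v < enum_rank w)%N.
Proof.
move=> vt; rewrite /eps.
have -> : [set u in v |: t | (enum_rank u < enum_rank w)%N] =
  if (enum_rank v < enum_rank w)%N then v |: [set u in t | (enum_rank u < enum_rank w)%N]
  else [set u in t | (enum_rank u < enum_rank w)%N].
  apply/setP=> u; case: (eqVneq u v) => [->|uv].
    by case: ifP => h; rewrite !inE ?eqxx ?(negbTE vt) ?h.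
  by case: ifP => h; rewrite !inE ?(negbTE uv).
case: ifP => _; last by rewrite addbF.
rewrite cardsU1 inE (negbTE vt) /=.
by rewrite add0n addbT.
Qed.

Lemma sgn_sum (V : finType) (G : zmodType) b (P : pred V) (F : V -> G) :
  sgn b (\sum_(v | P v) F v) = \sum_(v | P v) sgn b (F v).
Proof. by case: b; rewrite /sgn // sumrN. Qed.

Lemma bd_bd (V : finType) (G : zmodType) (c : chain V G) : bd (bd c) = 0.
Proof.
apply/ffunP=> t; rewrite [RHS]ffunE.
case: (eqVneq t set0) => [->|nt]; first by rewrite ffunE eqxx.
rewrite bdE //.
under eq_bigr => v.
  rewrite inE => vt.
  rewrite bdE; last by apply/set0Pn; exists v; rewrite setU11.
  rewrite sgn_sum.
  under eq_bigr => w.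
    rewrite !inE negb_or => /andP[wv wt].
    rewrite epsU //.
  over.
over.
rewrite /= pair_big_dep /=.
rewrite (bigID (fun p : V * V => (enum_rank p.1 < enum_rank p.2)%N)) /=.
rewrite [X in _ + X](reindex_inj (h := fun p : V * V => (p.2, p.1))) /=; last first.
  by move=> [a b] [a' b'] /= [-> ->].
rewrite [X in _ + X](eq_bigl (fun p : V * V => ((p.1 \in ~: t) && (p.2 \in ~: (p.1 |: t)))
   && (enum_rank p.1 < enum_rank p.2)%N)); last first.
  move=> [a b] /=; rewrite !inE; case: (eqVneq a b) => [->|ab] /=; first by rewrite !andbF.
  rewrite -leqNgt ltn_neqAle.
  have -> : (enum_rank a != enum_rank b :> nat) = true.
    by apply/negP => /eqP /ord_inj /enum_rank_inj /eqP; rewrite (negbTE ab).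
  by case: (a \in t); case: (b \in t).
rewrite -big_split /=; apply: big1 => [[a b]] /= /andP[_ h].
have -> : (enum_rank b < enum_rank a)%N = false by rewrite ltnNge ltnW.
rewrite h setUCA addbT addbF.
by case: (eps t a); case: (eps t b); rewrite /sgn /= ?opprK ?subrr ?addNr.
Qed.
Lemma bdD (V : finType) (G : zmodType) (c d : chain V G) : bd (c + d) = bd c + bd d.
Proof.
apply/ffunP=> t; rewrite !ffunE; case: ifP => _; first by rewrite addr0.
rewrite -big_split /=; apply: eq_bigr => v _; rewrite !ffunE.
by case: ifP => _ //; rewrite opprD.
Qed.

Lemma bdN (V : finType) (G : zmodType) (c : chain V G) : bd (- c) = - bd c.
Proof.
apply/ffunP=> t; rewrite !ffunE; case: ifP => _; first by rewrite oppr0.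
rewrite -sumrN; apply: eq_bigr => v _; rewrite !ffunE.
by case: ifP.
Qed.

Lemma bdB (V : finType) (G : zmodType) (c d : chain V G) : bd (c - d) = bd c - bd d.
Proof. by rewrite bdD bdN. Qed.

Lemma bd0 (V : finType) (G : zmodType) : bd (0 : chain V G) = 0.
Proof.
apply/ffunP=> t; rewrite !ffunE; case: ifP => _ //.
by apply: big1 => v _; rewrite ffunE; case: ifP => _ //; rewrite oppr0.
Qed.

Lemma inG0 (V : finType) (G : zmodType) (K : {set {set V}}) n : inG K n (0 : chain V G).
Proof. by move=> s; rewrite ffunE eqxx. Qed.

Lemma inGD (V : finType) (G : zmodType) (K : {set {set V}}) n (c d : chain V G) :
  inG K n c -> inG K n d -> inG K n (c + d).
Proof.
move=> hc hd s; rewrite ffunE; case: (eqVneq (c s) 0) => [->|/hc //].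
by rewrite add0r => /hd.
Qed.

Lemma inGN (V : finType) (G : zmodType) (K : {set {set V}}) n (c : chain V G) :
  inG K n c -> inG K n (- c).
Proof. by move=> hc s; rewrite ffunE oppr_eq0 => /hc. Qed.

Lemma inG_sub (V : finType) (G : zmodType) (K L : {set {set V}}) n (c : chain V G) :
  K \subset L -> inG K n c -> inG L n c.
Proof. by move=> KL hc s /hc [/(subsetP KL) ? ?]. Qed.

Lemma inGI (V : finType) (G : zmodType) (K L : {set {set V}}) n (c : chain V G) :
  inG K n c -> inG L n c -> inG (K :&: L) n c.
Proof. by move=> h1 h2 s cs; have [? ?] := h1 s cs; have [? _] := h2 s cs; rewrite inE; split => //; apply/andP. Qed.

Lemma Inf0 (V : finType) (G : zmodType) (K : {set {set V}}) n : Inf K n (0 : chain V G).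
Proof. by split; [exact: inG0 | case: n => // n; rewrite bd0; exact: inG0]. Qed.

Lemma InfD (V : finType) (G : zmodType) (K : {set {set V}}) n (c d : chain V G) :
  Inf K n c -> Inf K n d -> Inf K n (c + d).
Proof.
case: n => [|n] [h1 h2] [h3 h4]; (split; first exact: inGD) => //.
by rewrite bdD; exact: inGD.
Qed.

Lemma InfN (V : finType) (G : zmodType) (K : {set {set V}}) n (c : chain V G) :
  Inf K n c -> Inf K n (- c).
Proof.
case: n => [|n] [h1 h2]; (split; first exact: inGN) => //.
by rewrite bdN; exact: inGN.
Qed.

Lemma InfB (V : finType) (G : zmodType) (K : {set {set V}}) n (c d : chain V G) :
  Inf K n c -> Inf K n d -> Inf K n (c - d).
Proof. by move=> h1 h2; apply: InfD => //; apply: InfN. Qed.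

Lemma Inf_sub (V : finType) (G : zmodType) (K L : {set {set V}}) n (c : chain V G) :
  K \subset L -> Inf K n c -> Inf L n c.
Proof.
move=> KL; case: n => [|n] [h1 h2]; (split; first exact: (inG_sub KL)) => //; exact: (inG_sub KL).
Qed.

Lemma InfI (V : finType) (G : zmodType) (K L : {set {set V}}) n (c : chain V G) :
  Inf K n c -> Inf L n c -> Inf (K :&: L) n c.
Proof.
case: n => [|n] [h1 h2] [h3 h4]; (split; first exact: inGI) => //; exact: inGI.
Qed.

Lemma Inf_bd (V : finType) (G : zmodType) (K : {set {set V}}) n (c : chain V G) :
  Inf K n.+1 c -> Inf K n (bd c).
Proof.
case=> _ h; split=> //; case: n h => // n _; rewrite bd_bd; exact: inG0.
Qed.

Definition cond (V : finType) (K L : {set {set V}}) :=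
  forall s s', s \in K -> s' \in L -> s :&: s' = set0 \/ s :&: s' \in K :&: L.

Definition restr (V : finType) (G : zmodType) (K : {set {set V}}) (c : chain V G) : chain V G :=
  [ffun s => if s \in K then c s else 0].

Lemma bd_nz (V : finType) (G : zmodType) (c : chain V G) f :
  bd c f != 0 -> f != set0 /\ exists2 v, v \notin f & c (v |: f) != 0.
Proof.
rewrite ffunE; case: (eqVneq f set0) => [_|nf]; first by rewrite eqxx.
move=> hs; split=> //.
case: (pickP (fun v => (v \notin f) && (c (v |: f) != 0))) => [v /andP[? ?]|h].
  by exists v.
move: hs; rewrite big1 ?eqxx // => v; rewrite inE => vf.
by move: (h v); rewrite vf /= => /negbFE /eqP ->; case: ifP; rewrite ?oppr0.
Qed.

Lemma setU1I (V : finType) (v w : V) (f : {set V}) : v != w -> (v |: f) :&: (w |: f) = f.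
Proof.
move=> vw; rewrite -setUIl.
have -> : [set v] :&: [set w] = set0.
  by apply/setP=> u; rewrite !inE; apply/negP => /andP[/eqP -> /eqP e]; move: vw; rewrite e eqxx.
by rewrite set0U.
Qed.

Lemma split_bd (V : finType) (G : zmodType) (K L : {set {set V}}) n (c c1 c2 : chain V G) :
  cond K L -> Inf (K :|: L) n c -> c = c1 + c2 -> inG K n c1 -> inG L n c2 ->
  (forall s, c1 s != 0 -> c2 s = 0) -> Inf K n c1.
Proof.
move=> hKL [_ hc] ec h1 h2 hdis; split=> //; case: n hc h1 h2 => // n hc h1 h2 f hf.
have [nf [v vf hv]] := bd_nz hf.
have [vK vc] := h1 _ hv.
have cf : #|f| = n.+1 by move: vc; rewrite cardsU1 vf add1n => -[].
split=> //; case: (boolP (f \in K)) => // fK; exfalso.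
case: (eqVneq (bd c2 f) 0) => [e2|n2].
  have : bd c f != 0 by rewrite ec bdD ffunE e2 addr0.
  move/hc => [fU _]; move: fU; rewrite inE (negbTE fK) /= => fL.
  have := hKL _ _ vK fL; rewrite (setIidPr (subsetUr _ _)) => -[ef|].
    by move: nf; rewrite ef eqxx.
  by rewrite inE (negbTE fK).
have [_ [w wf hw]] := bd_nz n2.
have [wL _] := h2 _ hw.
have vw : v != w by apply/eqP => evw; move: hw; rewrite -evw hdis ?eqxx.
have := hKL _ _ vK wL; rewrite setU1I // => -[ef|].
  by move: nf; rewrite ef eqxx.
by rewrite inE (negbTE fK).
Qed.

Lemma Inf_split (V : finType) (G : zmodType) (K L : {set {set V}}) n (c : chain V G) :
  cond K L -> Inf (K :|: L) n c -> Inf K n (restr K c) /\ Inf L n (c - restr K c).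
Proof.
move=> hKL hc.
have e : c = restr K c + (c - restr K c) by rewrite addrC subrK.
have h1 : inG K n (restr K c).
  by move=> s; rewrite ffunE; case: ifP => sK; rewrite ?eqxx // => /hc.1 [].
have h2 : inG L n (c - restr K c).
  move=> s; rewrite !ffunE; case: ifP => sK; first by rewrite subrr eqxx.
  by rewrite subr0 => /hc.1 [sU ->]; move: sU; rewrite inE sK.
have hd : forall s, restr K c s != 0 -> (c - restr K c) s = 0.
  by move=> s; rewrite !ffunE; case: ifP => _; rewrite ?eqxx // subrr.
split; first exact: (split_bd hKL hc e).
have hLK : cond L K.
  move=> s s' sL s'K; rewrite setIC [L :&: K]setIC; exact: hKL.
apply: (split_bd (c := c) (c2 := restr K c) hLK).
- by rewrite setUC.
- by rewrite addrC.
- exact: h2.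
- exact: h1.
move=> s hs; apply/eqP; apply: contraNT hs => /hd ->; by rewrite eqxx.
Qed.
Lemma swapE (G : zmodType) (x1 x2 y1 y2 : G) : x1 + x2 = y1 + y2 -> x1 - y1 = y2 - x2.
Proof.
by move=> e; apply/eqP; rewrite subr_eq addrAC (addrC y2) -e addrK.
Qed.

Lemma restrD (V : finType) (G : zmodType) (K : {set {set V}}) (c d : chain V G) :
  restr K (c + d) = restr K c + restr K d.
Proof. by apply/ffunP=> s; rewrite !ffunE; case: ifP; rewrite ?addr0. Qed.

Lemma restrN (V : finType) (G : zmodType) (K : {set {set V}}) (c : chain V G) :
  restr K (- c) = - restr K c.
Proof. by apply/ffunP=> s; rewrite !ffunE; case: ifP; rewrite ?oppr0. Qed.

Lemma restrB (V : finType) (G : zmodType) (K : {set {set V}}) (c d : chain V G) :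
  restr K (c - d) = restr K c - restr K d.
Proof. by rewrite restrD restrN. Qed.

Lemma relB0 (V : finType) (G : zmodType) (K L : {set {set V}}) n :
  relB K L n (0 : chain V G).
Proof. by exists 0, 0; rewrite bd0 addr0; split; [exact: Inf0|split; [exact: Inf0|]]. Qed.

Lemma relBN (V : finType) (G : zmodType) (K L : {set {set V}}) n (c : chain V G) :
  relB K L n c -> relB K L n (- c).
Proof.
move=> [d [a [hd [ha ->]]]]; exists (- d), (- a); split; first exact: InfN.
by split; [exact: InfN | rewrite bdN opprD].
Qed.

Lemma relBD (V : finType) (G : zmodType) (K L : {set {set V}}) n (c c' : chain V G) :
  relB K L n c -> relB K L n c' -> relB K L n (c + c').
Proof.
move=> [d [a [hd [ha ->]]]] [d' [a' [hd' [ha' ->]]]]; exists (d + d'), (a + a').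
split; first exact: InfD. split; first exact: InfD.
by rewrite bdD addrACA.
Qed.

Lemma relBI (V : finType) (G : zmodType) (K L : {set {set V}}) n (d a : chain V G) :
  Inf K n.+1 d -> Inf L n a -> relB K L n (bd d + a).
Proof. by move=> hd ha; exists d, a. Qed.

Lemma relB_sub (V : finType) (G : zmodType) (K L K' L' : {set {set V}}) n (c : chain V G) :
  K \subset K' -> L \subset L' -> relB K L n c -> relB K' L' n c.
Proof.
move=> s1 s2 [d [a [hd [ha ->]]]]; apply: relBI; [exact: Inf_sub hd|exact: Inf_sub ha].
Qed.

Lemma relZ_dec (V : finType) (G : zmodType) (H A H' A' : {set {set V}}) n
  (y1 y2 b1 b2 : chain V G) :
  A \subset H -> A' \subset H' -> Inf H n.+1 y1 -> Inf H' n.+1 y2 ->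
  Inf A n b1 -> Inf A' n b2 -> bd y1 + bd y2 = b1 + b2 ->
  relZ (H :&: H') (A :&: A') n (bd y1 - b1).
Proof.
move=> sAH sAH' h1 h2 hb1 hb2 e.
have E := swapE e.
split.
  apply: InfI; first exact: (InfB (Inf_bd h1) (Inf_sub sAH hb1)).
  by rewrite E; exact: (InfB (Inf_sub sAH' hb2) (Inf_bd h2)).
case: n h1 h2 hb1 hb2 e E => // n h1 h2 hb1 hb2 e E; apply: InfI.
  by rewrite bdB bd_bd sub0r; exact: (InfN (Inf_bd hb1)).
by rewrite E bdB bd_bd subr0; exact: (Inf_bd hb2).
Qed.

Lemma indep (V : finType) (G : zmodType) (H A H' A' : {set {set V}}) n
  (y1 y2 b1 b2 y1' y2' b1' b2' : chain V G) :
  y1 + y2 = y1' + y2' -> b1 + b2 = b1' + b2' ->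
  Inf H n.+1 y1 -> Inf H' n.+1 y2 -> Inf H n.+1 y1' -> Inf H' n.+1 y2' ->
  Inf A n b1 -> Inf A' n b2 -> Inf A n b1' -> Inf A' n b2' ->
  relB (H :&: H') (A :&: A') n ((bd y1 - b1) - (bd y1' - b1')).
Proof.
move=> e1 e2 h1 h2 h1' h2' hb1 hb2 hb1' hb2'.
exists (y1 - y1'), (b1' - b1); split.
  apply: InfI; first exact: InfB.
  by rewrite (swapE e1); exact: InfB.
split.
  apply: InfI; first exact: InfB.
  by rewrite (swapE (esym e2)); exact: InfB.
by rewrite bdB opprB addrACA [RHS]addrACA (addrC (- b1)).
Qed.

Lemma canon (V : finType) (G : zmodType) (H A H' A' : {set {set V}}) n (w : chain V G) :
  cond H H' -> cond A A' -> relZ (H :|: H') (A :|: A') n.+1 w ->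
  Inf H n.+1 (restr H w) /\ Inf H' n.+1 (w - restr H w) /\
  Inf A n (restr A (bd w)) /\ Inf A' n (bd w - restr A (bd w)).
Proof.
move=> cH cA [h1 h2].
have [? ?] := Inf_split cH h1; have [? ?] := Inf_split cA h2; by [].
Qed.

Lemma rep (V : finType) (G : zmodType) (H A H' A' : {set {set V}}) n
  (w y1 y2 b1 b2 : chain V G) :
  cond H H' -> cond A A' -> relZ (H :|: H') (A :|: A') n.+1 w ->
  w = y1 + y2 -> bd w = b1 + b2 ->
  Inf H n.+1 y1 -> Inf H' n.+1 y2 -> Inf A n b1 -> Inf A' n b2 ->
  relB (H :&: H') (A :&: A') n ((bd y1 - b1) - (bd (restr H w) - restr A (bd w))).
Proof.
move=> cH cA hw e1 e2 h1 h2 hb1 hb2.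
have [k1 [k2 [k3 k4]]] := canon cH cA hw.
apply: (indep (y2 := y2) (b2 := b2) (y2' := w - restr H w) (b2' := bd w - restr A (bd w)))
  => //; by rewrite subrKC.
Qed.

Lemma bdp_relZ (V : finType) (G : zmodType) (K L : {set {set V}}) n (d p : chain V G) :
  L \subset K -> Inf K n.+1 d -> Inf L n p -> relZ K L n (bd d + p).
Proof.
move=> sLK hd hp; split; first exact: (InfD (Inf_bd hd) (Inf_sub sLK hp)).
case: n hd hp => // m hd hp; rewrite bdD bd_bd add0r; exact: Inf_bd.
Qed.

Lemma relZB (V : finType) (G : zmodType) (K L : {set {set V}}) n (c d : chain V G) :
  relZ K L n c -> relZ K L n d -> relZ K L n (c - d).
Proof.
case: n => [|m] [h1 h2] [h3 h4]; (split; first exact: InfB) => //.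
by rewrite bdB; exact: InfB.
Qed.

Lemma relZI (V : finType) (G : zmodType) (K L K' L' : {set {set V}}) n (c : chain V G) :
  relZ K L n c -> relZ K' L' n c -> relZ (K :&: K') (L :&: L') n c.
Proof.
case: n => [|m] [h1 h2] [h3 h4]; (split; first exact: InfI) => //; exact: InfI.
Qed.

Theorem theorem3p888 (V : finType) (G : zmodType)
  (H A H' A' : {set {set V}}) :
  hypergraph H -> hypergraph A -> hypergraph H' -> hypergraph A' ->
  A \subset H -> A' \subset H' ->
  (forall s s', s \in H -> s' \in H' ->
     s :&: s' = set0 \/ s :&: s' \in H :&: H') ->
  (forall t t', t \in A -> t' \in A' ->
     t :&: t' = set0 \/ t :&: t' \in A :&: A') ->
  exists delta : nat -> {ffun {set V} -> G} -> {ffun {set V} -> G},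
    (* delta_n is a well-defined group homomorphism on homology *)
    (forall n (z : {ffun {set V} -> G}), relZ (H :|: H') (A :|: A') n.+1 z ->
       relZ (H :&: H') (A :&: A') n (delta n z)) /\
    (forall n (z z' : {ffun {set V} -> G}), relZ (H :|: H') (A :|: A') n.+1 z ->
       relZ (H :|: H') (A :|: A') n.+1 z' ->
       relB (H :|: H') (A :|: A') n.+1 (z - z') ->
       relB (H :&: H') (A :&: A') n (delta n z - delta n z')) /\
    (forall n (z z' : {ffun {set V} -> G}), relZ (H :|: H') (A :|: A') n.+1 z ->
       relZ (H :|: H') (A :|: A') n.+1 z' ->
       relB (H :&: H') (A :&: A') n (delta n (z + z') - (delta n z + delta n z'))) /\
    (* exactness at H_n(HnH', AnA') : ker i_n = im delta_n *)
    (forall n (z : {ffun {set V} -> G}), relZ (H :&: H') (A :&: A') n z ->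
       (relB H A n z /\ relB H' A' n (- z)) <->
       (exists w : {ffun {set V} -> G}, relZ (H :|: H') (A :|: A') n.+1 w /\
                  relB (H :&: H') (A :&: A') n (z - delta n w))) /\
    (* exactness at H_n(H,A) (+) H_n(H',A') : ker j_n = im i_n *)
    (forall n (a b : {ffun {set V} -> G}), relZ H A n a -> relZ H' A' n b ->
       relB (H :|: H') (A :|: A') n (a + b) <->
       (exists z : {ffun {set V} -> G}, relZ (H :&: H') (A :&: A') n z /\
                  relB H A n (a - z) /\ relB H' A' n (b + z))) /\
    (* exactness at H_(n+1)(HuH', AuA') : ker delta_n = im j_(n+1) *)
    (forall n (w : {ffun {set V} -> G}), relZ (H :|: H') (A :|: A') n.+1 w ->
       relB (H :&: H') (A :&: A') n (delta n w) <->
       (exists a b : {ffun {set V} -> G}, relZ H A n.+1 a /\ relZ H' A' n.+1 b /\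
                    relB (H :|: H') (A :|: A') n.+1 (w - (a + b)))) /\
    (* exactness at H_0(HuH', AuA') : j_0 is surjective *)
    (forall (w : {ffun {set V} -> G}), relZ (H :|: H') (A :|: A') 0 w ->
       exists a b : {ffun {set V} -> G}, relZ H A 0 a /\ relZ H' A' 0 b /\
                   relB (H :|: H') (A :|: A') 0 (w - (a + b))).
Proof.
move=> _ _ _ _ sAH sAH' cH cA.
have sIH : H :&: H' \subset H := subsetIl _ _.
have sIH' : H :&: H' \subset H' := subsetIr _ _.
have sIA : A :&: A' \subset A := subsetIl _ _.
have sIA' : A :&: A' \subset A' := subsetIr _ _.
have sHU : H \subset H :|: H' := subsetUl _ _.
have sHU' : H' \subset H :|: H' := subsetUr _ _.
have sAU : A \subset A :|: A' := subsetUl _ _.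
have sAU' : A' \subset A :|: A' := subsetUr _ _.
pose D := fun (n : nat) (w : chain V G) => bd (restr H w) - restr A (bd w) : chain V G.
exists D.
have P1 : forall n (z : chain V G), relZ (H :|: H') (A :|: A') n.+1 z ->
    relZ (H :&: H') (A :&: A') n (D n z).
  move=> n z hz; have [h1 [h2 [h3 h4]]] := canon cH cA hz.
  by apply: relZ_dec h1 h2 h3 h4 _; rewrite // -bdD !subrKC.
split=> //.
split.
  move=> n z z' hz hz' [d [p [hd [hp e]]]].
  have hy : relZ (H :|: H') (A :|: A') n.+1 (z - z').
    split; first exact: (InfB hz.1 hz'.1).
    by rewrite bdB; exact: (InfB hz.2 hz'.2).
  have [hd1 hd2] := Inf_split cH hd.
  have [hp1 hp2] := Inf_split cA hp.
  have e1 : z - z' = (bd (restr H d) + restr A p) + (bd (d - restr H d) + (p - restr A p)).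
    by rewrite e addrACA -bdD !subrKC.
  have e2 : bd (z - z') = bd (restr A p) + bd (p - restr A p).
    by rewrite e bdD bd_bd add0r -bdD subrKC.
  have := rep cH cA hy e1 e2 (InfD (Inf_bd hd1) (Inf_sub sAH hp1))
    (InfD (Inf_bd hd2) (Inf_sub sAH' hp2)) (Inf_bd hp1) (Inf_bd hp2).
  rewrite bdD bd_bd add0r subrr sub0r => /relBN; rewrite opprK.
  have -> : D n z - D n z' = bd (restr H (z - z')) - restr A (bd (z - z')).
    rewrite /D !(restrB, bdB) !opprB.
    by rewrite [LHS](AC (2*2) ((1*4)*(3*2))).
  by [].
split.
  move=> n z z' hz hz'.
  have -> : D n (z + z') - (D n z + D n z') = 0.
    apply/eqP; rewrite subr_eq0; apply/eqP.
    rewrite /D !(restrD, bdD) opprD.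
    by rewrite [LHS](AC (2*2) ((1*3)*(2*4))).
  exact: relB0.
split.
  move=> n z hz; split.
    move=> [[d [a [hd [ha ez]]]] [d' [a' [hd' [ha' ez']]]]].
    have ebd : bd (d + d') = - a + - a'.
      rewrite bdD.
      have -> : bd d = z - a by rewrite ez addrK.
      have -> : bd d' = - z - a' by rewrite ez' addrK.
      by rewrite addrACA subrr add0r.
    have hw : relZ (H :|: H') (A :|: A') n.+1 (d + d').
      split; first exact: (InfD (Inf_sub sHU hd) (Inf_sub sHU' hd')).
      by rewrite ebd; exact: (InfD (InfN (Inf_sub sAU ha)) (InfN (Inf_sub sAU' ha'))).
    exists (d + d'); split => //.
    have := rep cH cA hw (erefl _) ebd hd hd' (InfN ha) (InfN ha').
    by rewrite opprK -ez.
  move=> [w [hw [e [q [he [hq eq]]]]]].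
  have [h1 [h2 [h3 h4]]] := canon cH cA hw.
  have ez : z = (bd e + q) + D n w by rewrite -eq subrK.
  have ED : D n w = (bd w - restr A (bd w)) - bd (w - restr H w).
    by apply: swapE; rewrite -bdD !subrKC.
  split.
    rewrite ez; apply: relBD; first exact: (relBI (Inf_sub sIH he) (Inf_sub sIA hq)).
    exact: (relBI h1 (InfN h3)).
  rewrite ez opprD; apply: relBD; first exact: (relBN (relBI (Inf_sub sIH' he) (Inf_sub sIA' hq))).
  by rewrite ED opprB; exact: (relBI h2 (InfN h4)).
split.
  move=> n a b ha hb; split.
    move=> [d [p [hd [hp e]]]].
    have [hd1 hd2] := Inf_split cH hd.
    have [hp1 hp2] := Inf_split cA hp.
    have eXY : (bd (restr H d) + restr A p) + (bd (d - restr H d) + (p - restr A p)) = a + b.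
      by rewrite e addrACA -bdD !subrKC.
    exists (a - (bd (restr H d) + restr A p)).
    have eb : b + (a - (bd (restr H d) + restr A p)) = bd (d - restr H d) + (p - restr A p).
      by rewrite addrA (addrC b) -eXY addrAC subrr add0r.
    have ez' : a - (bd (restr H d) + restr A p) = (bd (d - restr H d) + (p - restr A p)) - b.
      by rewrite -eb [RHS]addrC addKr.
    split; last split.
    - apply: relZI; first exact: (relZB ha (bdp_relZ sAH hd1 hp1)).
      by rewrite ez'; exact: (relZB (bdp_relZ sAH' hd2 hp2) hb).
    - by rewrite subKr; exact: relBI.
    - by rewrite eb; exact: relBI.
  move=> [z [hz [h1 h2]]].
  have -> : a + b = (a - z) + (b + z) by rewrite addrACA addNr addr0.
  exact: (relBD (relB_sub sHU sAU h1) (relB_sub sHU' sAU' h2)).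
split.
  move=> n w hw; have [h1 [h2 [h3 h4]]] := canon cH cA hw; split.
    move=> [e [q [he [hq eq]]]].
    exists (restr H w - e), (w - (restr H w - e)).
    have Ebd : bd (restr H w - e) = q + restr A (bd w).
      have E : bd (restr H w) = bd e + (q + restr A (bd w)) by rewrite addrA -eq /D subrK.
      by rewrite bdB E [bd e + _]addrC addrK.
    split; last split.
    - split; first exact: (InfB h1 (Inf_sub sIH he)).
      by rewrite Ebd; exact: (InfD (Inf_sub sIA hq) h3).
    - split.
        by rewrite opprB addrCA; exact: (InfD (Inf_sub sIH' he) h2).
      by rewrite bdB Ebd (addrC q) opprD addrA; exact: (InfB h4 (Inf_sub sIA' hq)).
    - by rewrite subrKC subrr; exact: relB0.
  move=> [a [b [ha [hb [d [p [hd [hp e]]]]]]]].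
  have [hd1 hd2] := Inf_split cH hd.
  have [hp1 hp2] := Inf_split cA hp.
  have ew : w = (a + (bd (restr H d) + restr A p)) + (b + (bd (d - restr H d) + (p - restr A p))).
    have ew0 : w = (bd d + p) + (a + b) by rewrite -e subrK.
    have eX : bd d + p = (bd (restr H d) + restr A p) + (bd (d - restr H d) + (p - restr A p)).
      by rewrite addrACA -bdD !subrKC.
    rewrite ew0 eX.
    by rewrite [LHS](AC ((2*2)*2) ((5*(1*2))*(6*(3*4)))).
  have ebw : bd w = (bd a + bd (restr A p)) + (bd b + bd (p - restr A p)).
    by rewrite {1}ew !bdD !bd_bd !add0r.
  have := rep cH cA hw ew ebw (InfD ha.1 (InfD (Inf_bd hd1) (Inf_sub sAH hp1)))
    (InfD hb.1 (InfD (Inf_bd hd2) (Inf_sub sAH' hp2))) (InfD ha.2 (Inf_bd hp1)) (InfD hb.2 (Inf_bd hp2)).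
  by rewrite !bdD bd_bd add0r subrr sub0r => /relBN; rewrite opprK.
move=> w [hw _].
have [h1 h2] := Inf_split cH hw.
exists (restr H w), (w - restr H w); split; first by split.
split; first by split.
by rewrite subrKC subrr; exact: relB0.
Qed.
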